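(* Let $X=(A_1,\dots,A_k)$ be a Markov tree-shift over $\mathcal{A}=\{0,\dots,d-1\}$. Then $$\limsup_{n\to\infty}\frac{\log p(n)}{1+k+\cdots+k^n}\le\frac1k\Big(\log d+\log\|A_1\|_{op}+\cdots+\log\|A_k\|_{op}\Big),$$ so in particular $h_{PS}(X)\le\frac1k(\log d+\sum_{m=1}^k\log\|A_m\|_{op})$ whenever $h_{PS}(X)$ exists.
   Context: $\Sigma=\{a_1,\dots,a_k\}$, $k\ge2$. For $\{0,1\}$-valued $d\times d$ matrices $A_1,\dots,A_k$ (each row and column of each containing at least one $1$), $X=(A_1,\dots,A_k)$ is the set of trees $t:\Sigma^*\to\mathcal{A}$ with $(A_m)_{t_x,t_{xa_m}}=1$ for all nodes $x$ and all $m$. $p(n)$ is the number of allowed blocks of length $n$ (labellings $t|_{\Delta_n}$, $t\in X$, $\Delta_n=\bigcup_{i=0}^n\Sigma^i$). $h_{PS}(X)=\lim_n\frac{\log p(n)}{1+k+\cdots+k^n}$. $\|M\|_{op}=\sup_{\|v\|_\infty=1}\|Mv\|_\infty$ with $\|v\|_\infty=\max_i|v_i|$; for a nonnegative matrix this is the maximal row sum. *)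

(* Defs.v *)
From HB Require Import structures.
From mathcomp Require Import all_boot all_order all_algebra.
From mathcomp Require Import all_classical all_reals all_analysis.
Set Implicit Arguments. Unset Strict Implicit. Unset Printing Implicit Defensive.
Import Order.TTheory GRing.Theory Num.Theory.

(* Alphabet Sigma = 'I_k (a_{m+1} <-> m), symbols A = 'I_d.
   Nodes of the tree are words seq 'I_k; the child x a_m is rcons x m. *)

Definition markov_mx (d : nat) (M : 'M[nat]_d) : Prop :=
  (forall i j, M i j <= 1)%N /\
  (forall i, exists j, M i j = 1%N) /\
  (forall j, exists i, M i j = 1%N).

Definition in_tree_shift (k d : nat) (A : 'I_k -> 'M[nat]_d)
  (t : seq 'I_k -> 'I_d) : Prop :=
  forall (x : seq 'I_k) (m : 'I_k), A m (t x) (t (rcons x m)) = 1%N.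

(* Delta_n = union of Sigma^i for i = 0..n, as a finite type. *)
Definition Delta (k n : nat) := {i : 'I_n.+1 & i.-tuple 'I_k}.

Definition Delta_word (k n : nat) (w : Delta k n) : seq 'I_k := tval (tagged w).

Definition num_blocks (k d : nat) (A : 'I_k -> 'M[nat]_d) (n : nat) : nat :=
  #|[set b : {ffun Delta k n -> 'I_d} |
      `[< exists t, in_tree_shift A t /\ forall w, b w = t (Delta_word w) >]]|.

(* Operator norm induced by the sup norm; for a nonnegative matrix this is
   the maximal row sum. *)
Definition opnorm (d : nat) (M : 'M[nat]_d) : nat :=
  \max_(i < d) \sum_(j < d) M i j.

(* Main.v *)
Require Import Defs.
From HB Require Import structures.
From mathcomp Require Import all_boot all_order all_algebra.
From mathcomp Require Import all_classical all_reals all_analysis.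
From mathcomp Require Import ring lra.
Import Order.TTheory GRing.Theory Num.Theory.
Set Implicit Arguments. Unset Strict Implicit.

Definition succs (d : nat) (M : 'M[nat]_d) (i : 'I_d) : seq 'I_d :=
  [seq j <- enum 'I_d | M i j == 1%N].
Definition idx (d : nat) (M : 'M[nat]_d) (i j : 'I_d) : nat := index j (succs M i).

Lemma size_succs d (M : 'M[nat]_d) i : markov_mx M -> (size (succs M i) <= opnorm M)%N.
Proof.
move=> [M1 _].
apply: (@leq_trans (\sum_(j < d) M i j)); last by apply: (leq_bigmax (F := fun i => \sum_(j < d) M i j)).
rewrite size_filter -sum1_count big_mkcond /= -big_enum /=.
apply: leq_sum => j _; case: eqP => [->|] //.
Qed.

Lemma idx_lt d (M : 'M[nat]_d) i j : markov_mx M -> M i j = 1%N -> (idx M i j < opnorm M)%N.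
Proof.
move=> HM Hij; apply: (leq_trans _ (size_succs i HM)).
by rewrite /idx index_mem mem_filter Hij eqxx mem_enum.
Qed.

Lemma idx_le d (M : 'M[nat]_d) i j : (idx M i j <= d)%N.
Proof.
apply: (leq_trans (index_size _ _)).
by rewrite size_filter (leq_trans (count_size _ _)) // size_enum_ord.
Qed.

Lemma idx_inj d (M : 'M[nat]_d) i j j' : M i j = 1%N -> M i j' = 1%N ->
  idx M i j = idx M i j' -> j = j'.
Proof.
move=> H1 H2 E.
have m1 : j \in succs M i by rewrite mem_filter H1 eqxx mem_enum.
have m2 : j' \in succs M i by rewrite mem_filter H2 eqxx mem_enum.
by rewrite -(nth_index j m1) -(nth_index j m2) /idx -/(idx M i j) E.
Qed.

Definition Droot (k n : nat) : Delta k n :=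
  existT (fun i : 'I_n.+1 => i.-tuple 'I_k) ord0 [tuple].

Definition lookup (k n d : nat) (b : {ffun Delta k n -> 'I_d}) (s : seq 'I_k) : 'I_d :=
  if [pick w | Delta_word w == s] is Some w then b w else b (Droot k n).

Lemma Delta_exists k n (s : seq 'I_k) : (size s <= n)%N ->
  exists w : Delta k n, Delta_word w = s.
Proof.
move=> H.
by exists (existT (fun i : 'I_n.+1 => i.-tuple 'I_k) (Ordinal (H : (size s < n.+1)%N)) (in_tuple s)).
Qed.

Lemma size_Delta_word k n (w : Delta k n) : (size (Delta_word w) <= n)%N.
Proof.
by case: w => i t; rewrite /Delta_word /= size_tuple -ltnS.
Qed.

Lemma lookup_t k n d (b : {ffun Delta k n -> 'I_d}) (t : seq 'I_k -> 'I_d) s :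
  (forall w, b w = t (Delta_word w)) -> (size s <= n)%N -> lookup b s = t s.
Proof.
move=> Hb Hs; rewrite /lookup; case: pickP => [w /eqP <-|H0]; first exact: Hb.
by have [w Hw] := Delta_exists Hs; move: (H0 w); rewrite Hw eqxx.
Qed.

Section Count.
Variables (k d n' : nat) (A : 'I_k -> 'M[nat]_d).
Hypothesis HA : forall m, markov_mx (A m).

Definition Blocks := [set b : {ffun Delta k n'.+1 -> 'I_d} |
      `[< exists t, in_tree_shift A t /\ forall w, b w = t (Delta_word w) >]].

Definition code (b : {ffun Delta k n'.+1 -> 'I_d}) :
   'I_d * {ffun Delta k n' * 'I_k -> 'I_d.+1} :=
  (lookup b [::], [ffun p : Delta k n' * 'I_k =>
     inord (idx (A p.2) (lookup b (Delta_word p.1)) (lookup b (rcons (Delta_word p.1) p.2)))]).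

Lemma code_inj : {in Blocks &, injective code}.
Proof.
move=> b1 b2 H1 H2 Ec; rewrite /Blocks !inE in H1 H2.
case: H1 => t1 [T1 E1]; case: H2 => t2 [T2 E2].
have key : forall s, (size s <= n'.+1)%N -> t1 s = t2 s.
  elim/last_ind => [_|x m IH].
    have := congr1 fst Ec => /=.
    by rewrite (lookup_t E1) // (lookup_t E2).
  rewrite size_rcons ltnS => Hx.
  have Hx' : (size x <= n'.+1)%N by apply: leq_trans Hx _.
  have [w Hw] := Delta_exists Hx.
  have : val ((code b1).2 (w, m)) = val ((code b2).2 (w, m)) by rewrite Ec.
  rewrite !ffunE /= Hw !(lookup_t E1) ?(lookup_t E2) ?size_rcons ?ltnS //.
  rewrite !inordK ?ltnS ?idx_le // (IH Hx') => E.
  apply: (idx_inj _ _ E); first by rewrite -(IH Hx'); apply: T1.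
  exact: T2.
apply/ffunP => w; rewrite E1 E2 key //; exact: size_Delta_word.
Qed.

Definition Fam (p : Delta k n' * 'I_k) : pred 'I_d.+1 := fun v => (v < opnorm (A p.2))%N.

Definition Cset : {set 'I_d * {ffun Delta k n' * 'I_k -> 'I_d.+1}} :=
  finset.setX [set: 'I_d] (finset.finset (fun f => f \in family Fam)).

Lemma code_in b : b \in Blocks -> code b \in Cset.
Proof.
move=> Hb; rewrite /Blocks inE in Hb; case/asboolP: Hb => t [T E].
rewrite /Cset !inE /=; apply/forallP => p; rewrite ffunE unfold_in /Fam /= inordK ?ltnS ?idx_le //.
apply: idx_lt => //.
have h1 := size_Delta_word p.1.
rewrite (lookup_t E) ?(lookup_t E) ?size_rcons ?ltnS ?h1 //; last exact: leq_trans h1 _.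
Qed.

Lemma foldr_prod (T : Type) (g : T -> nat) s : foldr muln 1 (map g s) = \prod_(x <- s) g x.
Proof. by elim: s => [|x s IH] /=; rewrite ?big_nil ?big_cons ?IH. Qed.

Lemma card_Fam p : (#|Fam p| <= opnorm (A p.2))%N.
Proof.
set N := opnorm (A p.2).
have sub : Fam p \subset [seq (inord (val i) : 'I_d.+1) | i in 'I_N].
  apply/fintype.subsetP => v vN0; have vN : (v < N)%N := vN0.
  have -> : v = inord (val (Ordinal vN)) :> 'I_d.+1.
    by apply: val_inj; rewrite /= inordK.
  by apply: map_f; rewrite mem_enum.
apply: (leq_trans (subset_leq_card sub)).
by apply: (leq_trans (leq_image_card _ _)); rewrite card_ord.
Qed.

Lemma num_blocks_bound :
  (num_blocks A n'.+1 <= d * (\prod_m opnorm (A m)) ^ #|{: Delta k n'}|)%N.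
Proof.
rewrite /num_blocks -/Blocks -(card_in_imset code_inj).
apply: (leq_trans (subset_leq_card (_ : _ \subset Cset))).
  by apply/fintype.subsetP => c /imsetP [b Hb ->]; apply: code_in.
rewrite cardsX cardsT card_ord leq_mul2l; apply/orP; right.
rewrite cardsE card_family foldr_prod big_enum /=.
apply: (leq_trans (leq_prod (E2 := fun p => opnorm (A p.2)) _)).
  by move=> p _; apply: card_Fam.
rewrite -(prod_nat_const [pred x : Delta k n' | true]).
rewrite -(pair_big (fun _ => true) (fun _ => true) (fun x m => opnorm (A m))) /=.
by [].
Qed.
End Count.

Local Open Scope ring_scope.
Section S1. Local Open Scope classical_set_scope.
Lemma esup_le_ev (R : realType) (u : (\bar R)^nat) (c : \bar R) :
  (forall n, (1 <= n)%N -> (u n <= c)%E) -> (limn_esup u <= c)%E.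
Proof.
move=> H; rewrite /limn_esup limf_esupE.
apply: (@le_trans _ _ (ereal_sup (u @` [set n | (1 <= n)%N]))).
  apply: ereal_inf_lbound; exists [set n | (1 <= n)%N] => //.
  by exists 1%N.
by apply: ub_ereal_sup => _ [n Hn <-]; apply: H.
Qed.
End S1.

Lemma ln_prod (R : realType) (I : finType) (F : I -> R) :
  (forall i, 0 < F i) -> ln (\prod_i F i) = \sum_i ln (F i).
Proof.
move=> Fp.
have : 0 < \prod_i F i /\ ln (\prod_i F i) = \sum_i ln (F i).
  apply: (big_rec2 (fun x y => 0 < y /\ ln y = x)).
    by rewrite ln1.
  move=> i x y _ [y0 <-]; split; first by rewrite mulr_gt0.
  by rewrite lnM // posrE.
by case.
Qed.

Lemma real_bound (R : realType) (k p d S' : nat) (N : 'I_k -> nat) :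
  (2 <= k)%N -> (0 < d)%N -> (1 <= S')%N -> (forall m, 0 < N m)%N ->
  (p <= d * (\prod_m N m) ^ S')%N ->
  ln (p%:R : R) / (1 + k * S')%N%:R <=
   k%:R^-1 * (ln (d%:R : R) + \sum_m ln ((N m)%:R : R)).
Proof.
move=> k2 d0 S1 N0 pb.
set Q := \sum_m ln ((N m)%:R : R).
have Q0 : 0 <= Q by apply: sumr_ge0 => m _; apply: ln_ge0; rewrite ler1n N0.
have ld0 : 0 <= ln (d%:R : R) by apply: ln_ge0; rewrite ler1n.
have lp : ln (p%:R : R) <= ln (d%:R : R) + S'%:R * Q.
  have [->|p0] := posnP p.
    by rewrite ln0 // addr_ge0 // mulr_ge0.
  have P0 : (0 < \prod_m N m)%N by rewrite prodn_gt0.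
  apply: (@le_trans _ _ (ln ((d * (\prod_m N m) ^ S')%N%:R : R))).
    rewrite ler_ln ?posrE ?ltr0n ?muln_gt0 ?expn_gt0 ?d0 ?P0 //.
    by rewrite ler_nat.
  rewrite natrM lnM ?posrE ?ltr0n ?expn_gt0 ?P0 //.
  rewrite natrX lnXn ?ltr0n // natr_prod ln_prod; last by move=> i; rewrite ltr0n.
  by rewrite mulr_natl.
have kp : 0 < (k%:R : R) by rewrite ltr0n (leq_trans _ k2).
have Sp : 0 < ((1 + k * S')%N%:R : R) by rewrite ltr0n.
rewrite ler_pdivrMr //; apply: (le_trans lp).
rewrite natrD natrM.
set a := k%:R^-1 * ln (d%:R : R); set b := k%:R^-1 * Q.
have ea : ln (d%:R : R) = k%:R * a by rewrite /a mulrA mulfV ?gt_eqF // mul1r.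
have eb : Q = k%:R * b by rewrite /b mulrA mulfV ?gt_eqF // mul1r.
have a0 : 0 <= a by rewrite mulr_ge0 // invr_ge0 ltW.
have b0 : 0 <= b by rewrite mulr_ge0 // invr_ge0 ltW.
have kS : (k%:R : R) <= k%:R * S'%:R by rewrite ler_peMr ?ler1n // ltW.
have h1 : (k%:R : R) * a <= k%:R * S'%:R * a by rewrite ler_wpM2r.
rewrite ea eb.
have -> : k%:R^-1 * (k%:R * a + k%:R * b) = a + b :> R by rewrite -mulrDr mulrA mulVf ?gt_eqF // mul1r.
have -> : (a + b) * (1 + k%:R * S'%:R) = a + b + k%:R * S'%:R * a + k%:R * S'%:R * b :> R by ring.
have -> : (S'%:R * (k%:R * b)) = k%:R * S'%:R * b :> R by ring.
lra.
Qed.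

Lemma card_Delta k n : #|{: Delta k n}| = (\sum_(i < n.+1) k ^ i)%N.
Proof.
rewrite card_tagged sumnE big_map big_enum /=.
by apply: eq_bigr => i _; rewrite card_tuple card_ord.
Qed.

Theorem mainTheorem8 (R : realType) (k d : nat) (A : 'I_k -> 'M[nat]_d) :
  (2 <= k)%N -> (0 < d)%N -> (forall m, markov_mx (A m)) ->
  (limn_esup (fun n : nat =>
      ((ln ((num_blocks A n)%:R : R)) / ((\sum_(i < n.+1) k ^ i)%N)%:R)%:E)
   <= ((k%:R)^-1 * (ln (d%:R : R) + \sum_(m < k) ln ((opnorm (A m))%:R : R)))%:E)%E.
Proof.
move=> k2 d0 HA; apply: esup_le_ev => -[//|n'] _; rewrite lee_fin.
have hden : (\sum_(i < n'.+2) k ^ i)%N = (1 + k * \sum_(i < n'.+1) k ^ i)%N.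
  rewrite big_ord_recl expn0 big_distrr /=; congr (_ + _)%N.
  by apply: eq_bigr => i _; rewrite /bump /= expnS.
rewrite hden; apply: (@real_bound R k _ d _ (fun m => opnorm (A m))) => //.
- by rewrite big_ord_recl expn0 leq_addr.
- move=> m; have [j Hj] := (HA m).2.1 (Ordinal d0).
  apply: (leq_trans _ (leq_bigmax (F := fun i => \sum_(j < d) A m i j) (Ordinal d0))).
  by rewrite (bigD1 j) //= Hj.
- by rewrite -card_Delta; apply: num_blocks_bound.
Qed.
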